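(* For each $n\ge1$, $h\in\mathcal H_n$ and $\psi\in C^\alpha_{\mathrm{loc}}(\widehat\Delta)$ we have $(\xi\psi_n)\circ h\in C^\alpha_{\mathrm{loc}}(\Delta)$. More precisely, there exists $C>0$ such that $\|(\xi\psi_n)\circ h\|_\alpha\le C\|\psi\|_\alpha$ for all $\psi\in C^\alpha_{\mathrm{loc}}(\widehat\Delta)$, $h\in\mathcal H_n$ and $n\ge1$.
   Context: $\Delta=[0,1]$, $\alpha\in(0,1]$, $\mathcal P$ countable Lebesgue-mod-0 partition into open intervals, $F:\Delta\to\Delta$ full-branch, $C^{1+\alpha}$ on each element, with inverse branches $\mathcal H,\mathcal H_n$ of $F,F^n$ satisfying $|h'|_\infty\le C_0\rho^n$ ($h\in\mathcal H_n$) and $|\log|h'||_\alpha\le C_0$ ($h\in\mathcal H$), $\rho\in(0,1)$. $\xi$ is the ($\alpha$-Hölder) density of the absolutely continuous $F$-invariant probability $\mu_F$ with respect to Lebesgue. $\Omega\subset\mathbb R^N$ compact Riemannian manifold, $\widehat\Delta=\Delta\times\Omega$ with distance $|x_1-x_2|+|y_1-y_2|$, $\widehat F(x,y)=(F(x),G(x,y))$ with $G$ of class $C^{1+\alpha}$ and $|\widehat F^n(x,y_1)-\widehat F^n(x,y_2)|\le C_0\gamma^n|y_1-y_2|$ ($\gamma\in(0,1)$); write $\widehat F^n(x,y)=(F^n x,G_n(x,y))$. Fix $0\in\Omega$ and set $\psi_n(x)=\psi(\widehat F^n(x,0))$. $C^\alpha_{\mathrm{loc}}(\widehat\Delta)$: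 bounded $\psi$ with $\|\psi\|_\alpha=|\psi|_\infty+\sup_{h\in\mathcal H}\sup\frac{|\psi(hx_1,y_1)-\psi(hx_2,y_2)|}{|x_1-x_2|^\alpha+|y_1-y_2|}<\infty$. $C^\alpha_{\mathrm{loc}}(\Delta)$: bounded $\phi$ with $\|\phi\|_\alpha=|\phi|_\infty+\sup_{h\in\mathcal H}\sup_{x\ne y}|\phi(hx)-\phi(hy)|/|x-y|^\alpha<\infty$. *)

(* Defs.v *)
From HB Require Import structures.
From mathcomp Require Import all_boot all_order all_algebra.
From mathcomp Require Import all_classical all_reals all_analysis.
Set Implicit Arguments. Unset Strict Implicit. Unset Printing Implicit Defensive.
Import Order.TTheory GRing.Theory Num.Theory.
Import numFieldNormedType.Exports.
Local Open Scope classical_set_scope.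
Local Open Scope ring_scope.

Section Setting.
Context {R : realType} {N : nat} {I : Type}.

(* Delta = [0,1] and its interior (Delta modulo the null set {0,1}) *)
Definition Delta : set R := [set x | 0 <= x <= 1].
Definition Delta_o : set R := [set x | 0 < x < 1].
Definition oint (p q : R) : set R := [set x | p < x < q].

Definition enorm (y : 'rV[R]_N) : R := Num.sqrt (\sum_(k < N) y ord0 k ^+ 2).

Definition holder_on (A : set R) (a : R) (f : R -> R) (K : R) : Prop :=
  forall x y, A x -> A y -> `|f x - f y| <= K * `|x - y| `^ a.

Definition C1a_interval (a : R) (F : R -> R) (p q : R) : Prop :=
  (forall x, oint p q x -> derivable F x 1) /\
  exists K : R, holder_on (oint p q) a (derive1 F) K.

Definition C1a_on (a : R) (S : set (R * 'rV[R]_N))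
    (f : R * 'rV[R]_N -> 'rV[R]_N) : Prop :=
  exists U : set (R * 'rV[R]_N),
    [/\ open U, S `<=` U, (forall z, U z -> differentiable f z) &
      exists K : R, forall z w v, S z -> S w ->
        `|'d f z v - 'd f w v| <= K * `|z - w| `^ a * `|v| ].

Definition Fhat (F : R -> R) (G : R -> 'rV[R]_N -> 'rV[R]_N)
    (z : R * 'rV[R]_N) : R * 'rV[R]_N := (F z.1, G z.1 z.2).
Definition Fhatn F G (n : nat) (z : R * 'rV[R]_N) := iter n (Fhat F G) z.

Definition dhat (z w : R * 'rV[R]_N) : R := `|z.1 - w.1| + enorm (z.2 - w.2).

Definition psin F G (psi : R * 'rV[R]_N -> R) (n : nat) (x : R) : R :=
  psi (Fhatn F G n (x, 0)).

(* H_n : inverse branches of F^n = compositions of n inverse branches of F *)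
Fixpoint Hn (hb : I -> R -> R) (n : nat) : set (R -> R) :=
  match n with
  | O => [set id]
  | S m => fun g => exists i h, Hn hb m h /\ g = hb i \o h
  end.

Definition normD (a : R) (hb : I -> R -> R) (phi : R -> R) : \bar R :=
  (ereal_sup [set (`|phi x|)%:E | x in Delta_o] +
   ereal_sup [set r | exists i x y, [/\ Delta_o x, Delta_o y, x <> y &
        r = (`|phi (hb i x) - phi (hb i y)| / `|x - y| `^ a)%:E]])%E.

Definition normDhat (a : R) (hb : I -> R -> R) (Om : set 'rV[R]_N)
    (psi : R * 'rV[R]_N -> R) : \bar R :=
  (ereal_sup [set (`|psi z|)%:E | z in [set z | Delta_o z.1 /\ Om z.2]] +
   ereal_sup [set r | exists i x1 x2 y1 y2,
        [/\ Delta_o x1 /\ Delta_o x2, Om y1 /\ Om y2, (x1, y1) <> (x2, y2) &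
        r = (`|psi (hb i x1, y1) - psi (hb i x2, y2)|
               / (`|x1 - x2| `^ a + enorm (y1 - y2)))%:E]])%E.

Definition standing (a : R) (p q : I -> R) (F : R -> R) (hb : I -> R -> R)
    (C0 rho gamma : R) (xi : R -> R) (Om : set 'rV[R]_N)
    (G : R -> 'rV[R]_N -> 'rV[R]_N) : Prop :=
  [/\
   [/\ 0 < a <= 1, 0 < rho < 1 & 0 < gamma < 1],
   [/\ countable [set: I],
       (forall i, 0 <= p i /\ p i < q i /\ q i <= 1),
       (forall i j, i <> j -> oint (p i) (q i) `&` oint (p j) (q j) = set0) &
       lebesgue_measure (Delta `\` \bigcup_i oint (p i) (q i)) = 0%E],
   (* F full branch, C^{1+a} on each element, with inverse branches hb i *)
   [/\ (forall i, C1a_interval a F (p i) (q i)),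
       (forall i x, Delta_o x -> oint (p i) (q i) (hb i x) /\ F (hb i x) = x) &
       (forall i y, oint (p i) (q i) y -> hb i (F y) = y)],
   [/\ (forall n h, Hn hb n h -> forall x, Delta_o x ->
          derivable h x 1 /\ `|derive1 h x| <= C0 * rho ^+ n),
       (forall i, holder_on Delta_o a (fun x => ln `|derive1 (hb i) x|) C0) &
   (* xi: alpha-Hoelder density of the absolutely continuous F-invariant
      probability measure mu_F *)
   [/\ (forall x, Delta x -> 0 <= xi x), measurable_fun Delta xi,
       (\int[lebesgue_measure]_(x in Delta) (xi x)%:E = 1)%E,
       (forall A, measurable A -> A `<=` Delta ->
          (\int[lebesgue_measure]_(x in (\bigcup_i oint (p i) (q i)) `&` F @^-1` A)
              (xi x)%:E =
           \int[lebesgue_measure]_(x in A) (xi x)%:E)%E) &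
       exists K, holder_on Delta a xi K]] &
   ([/\ compact Om, Om 0,
       (forall x y, Delta x -> Om y -> Om (G x y)) &
       C1a_on a [set z | Delta z.1 /\ Om z.2] (fun z => G z.1 z.2)] /\
   (forall n x y1 y2, Delta x -> Om y1 -> Om y2 ->
      dhat (Fhatn F G n (x, y1)) (Fhatn F G n (x, y2))
        <= C0 * gamma ^+ n * enorm (y1 - y2)))].

End Setting.

(* Main.v *)
Require Import Defs.
From HB Require Import structures.
From mathcomp Require Import all_boot all_order all_algebra.
From mathcomp Require Import all_classical all_reals all_analysis.
From mathcomp Require Import ring lra.
Import Order.TTheory GRing.Theory Num.Theory.
Import numFieldNormedType.Exports.
Local Open Scope classical_set_scope.
Local Open Scope ring_scope.


Section Helpers.
Context {R : realType} {I : Type}.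
Implicit Types (hb : I -> R -> R) (F : R -> R).

Lemma Hn_maps hb : (forall i x, Delta_o x -> Delta_o (hb i x)) ->
  forall n h, Hn hb n h -> forall x, Delta_o x -> Delta_o (h x).
Proof.
move=> hbD; elim=> [|m IH] h /=; first by move=> -> x.
by move=> [i [h' [Hh' ->]]] x Dx /=; apply: hbD; apply: IH.
Qed.

Lemma Hn_snoc hb n h i : Hn hb n h -> Hn hb n.+1 (h \o hb i).
Proof.
elim: n h => [|m IH] h /=.
  by move=> ->; exists i, id; split.
move=> [j [h' [Hh' ->]]]; exists j, (h' \o hb i); split => //.
by have := IH h' Hh'.
Qed.

Lemma Hn_peel hb F : (forall i x, Delta_o x -> Delta_o (hb i x)) ->
  (forall i x, Delta_o x -> F (hb i x) = x) ->
  forall n h, Hn hb n h -> forall k, (k <= n)%N ->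
  exists g, Hn hb (n - k) g /\ forall x, Delta_o x -> iter k F (h x) = g x.
Proof.
move=> hbD hbF; elim=> [|m IH] h Hh k.
  by rewrite leqn0 => /eqP ->; exists h.
case: k => [|k] hk; first by exists h; rewrite subn0.
move: Hh => /= [i [h' [Hh' ->]]].
have [g [Hg eg]] := IH h' Hh' k hk.
exists g; rewrite subSS; split => // x Dx.
have Dh := @Hn_maps hb hbD _ _ Hh' x Dx.
by rewrite -iterS iterSr /= hbF ?eg.
Qed.

Lemma Hn_lip (C0 rho : R) n (h : R -> R) :
  (forall x, Delta_o x -> derivable h x 1 /\ `|derive1 h x| <= C0 * rho ^+ n) ->
  0 <= C0 -> 0 <= rho <= 1 ->
  forall x y, Delta_o x -> Delta_o y -> `|h x - h y| <= C0 * `|x - y|.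
Proof.
move=> hd C0ge /andP[r0 r1].
have key : forall x y, x <= y -> Delta_o x -> Delta_o y ->
    `|h x - h y| <= C0 * `|x - y|.
  move=> x y xy Dx Dy.
  have sub : forall c, c \in `[x, y] -> Delta_o c.
    move=> c; rewrite in_itv /= => /andP[xc cy].
    move: Dx Dy; rewrite /Delta_o /= => /andP[x0 _] /andP[_ y1].
    by rewrite (lt_le_trans x0 xc) (le_lt_trans cy y1).
  rewrite distrC [`|x - y|]distrC.
  have [c cxy ->] : exists2 c, c \in `[x, y] & h y - h x = derive1 h c * (y - x).
    apply: MVT_segment => //.
      move=> c cI; rewrite derive1E; apply: derivableP.
      by apply: (proj1 (hd c _)); apply: sub; rewrite in_itv /= !ltW ?(itvP cI).
    by apply: derivable_within_continuous => c cI; apply: (proj1 (hd c _)); apply: sub.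
  rewrite normrM ler_wpM2r //.
  apply: le_trans (proj2 (hd c (sub c cxy))) _.
  by rewrite ler_piMr // exprn_ile1.
move=> x y Dx Dy; case: (leP x y) => [xy|yx]; first exact: key.
by rewrite distrC [`|x - y|]distrC; apply: key => //; apply: ltW.
Qed.

End Helpers.


Section Norms.
Context {R : realType} {N : nat}.

Lemma entry_le_norm (v : 'rV[R]_N) k : `|v ord0 k| <= `|v|.
Proof.
rewrite [X in _ <= X]/Num.Def.normr /= mx_normrE.
by apply: (le_trans _ (le_bigmax _ _ (ord0, k))).
Qed.

Lemma norm_le (v : 'rV[R]_N) (c : R) : 0 <= c ->
  (forall k, `|v ord0 k| <= c) -> `|v| <= c.
Proof.
move=> c0 H.
rewrite [X in X <= _]/Num.Def.normr /= mx_normrE (bigmax_le _ c0) //= => -[i j] _.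
by rewrite (ord1 i).
Qed.

Lemma entry_le_enorm (v : 'rV[R]_N) k : `|v ord0 k| <= enorm v.
Proof.
rewrite /enorm -sqrtr_sqr ler_sqrt; last by apply: sumr_ge0 => i _; exact: sqr_ge0.
rewrite (bigD1 k) //= lerDl sumr_ge0 // => i _; exact: sqr_ge0.
Qed.

Lemma norm_le_enorm (v : 'rV[R]_N) : `|v| <= enorm v.
Proof.
apply: norm_le; last exact: entry_le_enorm.
exact: sqrtr_ge0.
Qed.

Lemma enorm_le (v : 'rV[R]_N) (c : R) : 0 <= c ->
  (forall k, `|v ord0 k| <= c) -> enorm v <= Num.sqrt N%:R * c.
Proof.
move=> c0 H; rewrite /enorm -(ger0_norm c0) -sqrtr_sqr -sqrtrM ?ler0n //.
rewrite ler_sqrt; last by rewrite mulr_ge0 ?ler0n ?sqr_ge0.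
apply: le_trans (_ : \sum_(k < N) `|c| ^+ 2 <= _).
  apply: ler_sum => k _; rewrite -(real_normK (num_real (v _ _))) ler_sqr ?nnegrE //.
  exact: le_trans (H k) (ler_norm c).
by rewrite sumr_const card_ord mulr_natl (ger0_norm c0).
Qed.

Lemma enorm_le_norm (v : 'rV[R]_N) : enorm v <= Num.sqrt N%:R * `|v|.
Proof. by apply: enorm_le => //; exact: entry_le_norm. Qed.

End Norms.

Section Iter.
Context {R : realType} {N : nat}.
Implicit Types (F : R -> R) (G : R -> 'rV[R]_N -> 'rV[R]_N).

Lemma Fhatn_fst F G n z : (Fhatn F G n z).1 = iter n F z.1.
Proof. by elim: n => //= n IH; rewrite /Fhatn /= in IH *; rewrite IH. Qed.

Lemma Fhatn_Om F G (Om : set 'rV[R]_N) :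
  (forall x y, Delta x -> Om y -> Om (G x y)) ->
  forall n s y, (forall k, (k < n)%N -> Delta (iter k F s)) -> Om y ->
  Om (Fhatn F G n (s, y)).2.
Proof.
move=> GOm; elim=> [|n IH] s y HD Oy //=.
have := Fhatn_fst F G n (s, y); rewrite /Fhatn /= => ->.
apply: GOm; first exact: HD.
by apply: IH => // k kn; apply: HD; apply: ltnW.
Qed.

Lemma geom_bound (g : R) n : 0 <= g < 1 ->
  \sum_(k < n) g ^+ (n - k.+1) <= (1 - g)^-1.
Proof.
move=> /andP[g0 g1].
have -> : \sum_(k < n) g ^+ (n - k.+1) = \sum_(k < n) g ^+ k.
  rewrite [RHS](reindex_inj rev_ord_inj) /=.
  by apply: eq_bigr => k _.
have g1' : 0 < 1 - g by rewrite subr_gt0.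
rewrite -(ler_pM2l g1') mulfV ?gt_eqF //.
have -> : (1 - g) * \sum_(k < n) g ^+ k = 1 - g ^+ n.
  elim: n => [|n IH]; first by rewrite big_ord0 expr0 subrr mulr0.
  by rewrite big_ord_recr /= mulrDr IH exprS; ring.
by rewrite lerBlDr lerDl exprn_ge0.
Qed.

End Iter.


Section GLip.
Context {R : realType} {N : nat}.

Lemma dPhi (G : R -> 'rV[R]_N -> 'rV[R]_N) (c : R) y :
  differentiable (fun z : R * 'rV[R]_N => G z.1 z.2) (c, y) ->
  derivable (fun t => G t y) c 1 /\
  'D_1 (fun t => G t y) c = 'd (fun z : R * 'rV[R]_N => G z.1 z.2) (c, y) (1, 0).
Proof.
move=> df.
set f := (fun z : R * 'rV[R]_N => G z.1 z.2).
have E : (fun h : R => h^-1 *: (((fun t => G t y) \o shift c) (h *: 1) - G c y)) =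
         (fun h : R => h^-1 *: ((f \o shift (c, y)) (h *: ((1, 0) : R * 'rV[R]_N)) - f (c, y))).
  by apply: funext => h /=; rewrite /f /= scaler0 add0r.
split.
  have := @diff_derivable _ _ _ f (c, y) (1, 0) df.
  by rewrite /derivable E.
by rewrite /derive E -deriveE.
Qed.


Lemma comp_lip (G : R -> 'rV[R]_N -> 'rV[R]_N) (U : set (R * 'rV[R]_N)) (B : R) y k :
  (forall c, Delta c -> U (c, y)) ->
  (forall z, U z -> differentiable (fun z : R * 'rV[R]_N => G z.1 z.2) z) ->
  (forall c, Delta c -> `|'d (fun z : R * 'rV[R]_N => G z.1 z.2) (c, y) (1, 0)| <= B) ->
  forall u u', Delta u -> Delta u' -> u <= u' ->
  `|G u' y ord0 k - G u y ord0 k| <= B * `|u' - u|.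
Proof.
move=> SU dU HB u u' Du Du' uu'.
pose phi : R -> R := fun t => G t y ord0 k.
have sub : forall c, c \in `[u, u'] -> Delta c.
  move=> c; rewrite in_itv /= => /andP[uc cu].
  move: Du Du'; rewrite /Delta /= => /andP[u0 _] /andP[_ u1].
  by rewrite (le_trans u0 uc) (le_trans cu u1).
have dphi : forall c, Delta c -> derivable phi c 1 /\ `|'D_1 phi c| <= B.
  move=> c Dc; have [d1 d2] := @dPhi G c y (dU _ (SU c Dc)).
  have := derive_mx d1; move/derivable_mxP: d1 => d1.
  move=> /(congr1 (fun M : 'rV[R]_N => M ord0 k)); rewrite mxE => e.
  split; first exact: d1.
  rewrite /phi -e d2; apply: le_trans (HB c Dc).
  exact: entry_le_norm.
have [c cI ->] : exists2 c, c \in `[u, u'] & phi u' - phi u = 'D_1 phi c * (u' - u).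
  apply: MVT_segment => //.
    move=> c cI; apply: derivableP; apply: (proj1 (dphi c _)); apply: sub.
    by rewrite in_itv /= !ltW ?(itvP cI).
  by apply: derivable_within_continuous => c cI; apply: (proj1 (dphi c _)); apply: sub.
rewrite normrM ler_wpM2r //.
exact: (proj2 (dphi c (sub c cI))).
Qed.

Lemma tri (V : normedZmodType R) (x y : V) : `|x| <= `|y| + `|x - y|.
Proof. by rewrite -{1}(subrK y x) addrC ler_normD. Qed.

Lemma G_lip (a : R) (Om : set 'rV[R]_N) (G : R -> 'rV[R]_N -> 'rV[R]_N) :
  0 < a -> compact Om -> Om 0 ->
  C1a_on a [set z | Delta z.1 /\ Om z.2] (fun z => G z.1 z.2) ->
  exists L, 0 <= L /\ forall u u' y, Delta u -> Delta u' -> Om y ->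
    enorm (G u y - G u' y) <= L * `|u - u'|.
Proof.
move=> a0 cOm Om0 [U [oU SU dU [K HK]]].
have [M0 [_ HM]] := compact_bounded cOm.
pose D := `|M0| + 1.
have HD : forall y, Om y -> `|y| <= D.
  move=> y Oy; apply: (HM D) => //.
  by rewrite /D (le_lt_trans (ler_norm M0)) // ltrDl.
have D1 : 1 <= D by rewrite /D lerDr.
pose f := fun z : R * 'rV[R]_N => G z.1 z.2.
pose v : R * 'rV[R]_N := (1, 0).
pose B := `|'d f 0 v| + `|K| * D `^ a * `|v|.
have HB : forall c y, Delta c -> Om y -> `|'d f (c, y) v| <= B.
  move=> c y Dc Oy.
  have S0 : [set z | Delta z.1 /\ Om z.2] (0 : R * 'rV[R]_N).
    by split => //=; rewrite /Delta /= lexx ler01.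
  have := HK (c, y) 0 v (conj Dc Oy) S0 => H.
  apply: le_trans (@tri _ ('d f (c, y) v) ('d f 0 v)) _; rewrite /B lerD2l.
  apply: le_trans H _; rewrite subr0.
  apply: ler_wpM2r => //.
  apply: le_trans (ler_wpM2r (powR_ge0 _ _) (ler_norm K)) _.
  apply: ler_wpM2l => //.
  have D0 : 0 <= D by apply: le_trans D1.
  apply: (ge0_ler_powR (ltW a0)); rewrite ?nnegrE ?normr_ge0 ?D0 //.
  rewrite prod_normE /= ge_max HD // andbT.
  move: Dc; rewrite /Delta /= => /andP[c0 c1].
  by rewrite ger0_norm // (le_trans c1 D1).
have B0 : 0 <= B.
  apply: le_trans (HB 0 0 _ Om0); first exact: normr_ge0.
  by rewrite /Delta /= lexx ler01.
exists (Num.sqrt N%:R * B); split; first by rewrite mulr_ge0 ?sqrtr_ge0.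
move=> u u' y Du Du' Oy.
rewrite -mulrA; apply: enorm_le; first by rewrite mulr_ge0.
move=> k; rewrite !mxE.
have SU' : forall c, Delta c -> U (c, y) by move=> c Dc; apply: SU; split.
have HB' : forall c, Delta c -> `|'d f (c, y) v| <= B by move=> c Dc; exact: HB.
case: (leP u u') => uu'.
  by rewrite distrC [`|u - u'|]distrC; apply: (@comp_lip G U B y k SU' dU HB').
by apply: (@comp_lip G U B y k SU' dU HB') => //; apply: ltW.
Qed.

End GLip.


Section Tele.
Context {R : realType} {N : nat}.

Lemma tele (F : R -> R) (G : R -> 'rV[R]_N -> 'rV[R]_N) (Om : set 'rV[R]_N)
  (C0 gamma L D : R) n s s' :
  0 <= C0 -> 0 <= gamma < 1 -> 0 <= L -> 0 <= D ->
  (forall x y, Delta x -> Om y -> Om (G x y)) ->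
  (forall u u' y, Delta u -> Delta u' -> Om y ->
     enorm (G u y - G u' y) <= L * `|u - u'|) ->
  (forall n x y1 y2, Delta x -> Om y1 -> Om y2 ->
      dhat (Fhatn F G n (x, y1)) (Fhatn F G n (x, y2))
        <= C0 * gamma ^+ n * enorm (y1 - y2)) ->
  (forall k, (k <= n)%N -> [/\ Delta (iter k F s), Delta (iter k F s') &
       `|iter k F s - iter k F s'| <= D]) ->
  Om 0 ->
  enorm ((Fhatn F G n (s, 0)).2 - (Fhatn F G n (s', 0)).2)
    <= Num.sqrt N%:R * (C0 * L * D / (1 - gamma)).
Proof.
move=> C00 gg L0 D0 GOm Lip contr Hs Om0.
have [g0 g1] := andP gg.
pose Y k := (Fhatn F G k (s, 0)).2.
have OY : forall k, (k <= n)%N -> Om (Y k).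
  move=> k kn; apply: Fhatn_Om => // j jk.
  by case: (Hs j (leq_trans (ltnW jk) kn)).
pose Q k := (Fhatn F G (n - k) (iter k F s', Y k)).2.
have Q0 : Q 0%N = (Fhatn F G n (s', 0)).2 by rewrite /Q subn0.
have Qn : Q n = Y n by rewrite /Q subnn.
have step : forall k, (k < n)%N ->
    `|Q k.+1 - Q k| <= C0 * L * D * gamma ^+ (n - k.+1).
  move=> k kn.
  have e1 : Q k = (Fhatn F G (n - k.+1)
                    (iter k.+1 F s', G (iter k F s') (Y k))).2.
    by rewrite /Q /Fhatn -(subnSK kn) iterSr.
  have e2 : Q k.+1 = (Fhatn F G (n - k.+1)
                    (iter k.+1 F s', G (iter k F s) (Y k))).2.
    rewrite /Q; congr (Fhatn _ _ _ (_, _)).2.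
    rewrite /Y; have := Fhatn_fst F G k (s, 0); rewrite /Fhatn /= => ->.
    by [].
  rewrite e1 e2.
  have [Dk Dk' dk] := Hs k (ltnW kn).
  have [_ Dk1' _] := Hs k.+1 kn.
  have Oyk := OY k (ltnW kn).
  apply: le_trans (norm_le_enorm _) _.
  set A := Fhatn F G _ (_, G (iter k F s) _).
  set B := Fhatn F G _ (_, G (iter k F s') _).
  have AB : enorm (A.2 - B.2) <= dhat A B by rewrite /dhat lerDr normr_ge0.
  apply: le_trans AB _; rewrite /A /B.
  apply: le_trans (contr _ _ _ _ Dk1' (GOm _ _ Dk Oyk) (GOm _ _ Dk' Oyk)) _.
  have H : enorm (G (iter k F s) (Y k) - G (iter k F s') (Y k)) <= L * D.
    exact: le_trans (Lip _ _ _ Dk Dk' Oyk) (ler_wpM2l L0 dk).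
  apply: le_trans (ler_wpM2l (mulr_ge0 C00 (exprn_ge0 _ g0)) H) _.
  by rewrite le_eqVlt; apply/orP; left; apply/eqP; ring.
have tel : Y n - (Fhatn F G n (s', 0)).2 = \sum_(k < n) (Q k.+1 - Q k).
  by rewrite -Qn -Q0 -(big_mkord xpredT (fun k => Q k.+1 - Q k)) telescope_sumr.
apply: le_trans (enorm_le_norm _) _; rewrite ler_wpM2l ?sqrtr_ge0 //.
rewrite (_ : (Fhatn F G n (s, 0)).2 = Y n) // tel.
apply: le_trans (ler_norm_sum _ _ _) _.
apply: (@le_trans _ _ (\sum_(k < n) C0 * L * D * gamma ^+ (n - k.+1))).
  by apply: ler_sum => k _; apply: step.
rewrite -mulr_sumr; apply: ler_wpM2l; first by rewrite !mulr_ge0.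
exact: geom_bound.
Qed.

End Tele.


Theorem lemma6p19 (R : realType) (N : nat) (I : Type)
    (a : R) (p q : I -> R) (F : R -> R) (hb : I -> R -> R)
    (C0 rho gamma : R) (xi : R -> R) (Om : set 'rV[R]_N)
    (G : R -> 'rV[R]_N -> 'rV[R]_N) :
  standing a p q F hb C0 rho gamma xi Om G ->
  exists C : R, 0 < C /\
    forall (psi : R * 'rV[R]_N -> R), (normDhat a hb Om psi < +oo)%E ->
    forall (n : nat) (h : R -> R), (1 <= n)%N -> Hn hb n h ->
      let phi := fun x => xi (h x) * psin F G psi n (h x) in
      (normD a hb phi < +oo)%E /\
      (normD a hb phi <= C%:E * normDhat a hb Om psi)%E.
Proof.
move=> [[/andP[a0 a1] /andP[r0 r1] /andP[g0 g1]] [_ pq _ _] [_ hbI _]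
        [hder _ [xi0 _ _ _ [Kx Hx]]] [[cOm Om0 GOm C1G] contr]].
have hbD : forall i x, Delta_o x -> Delta_o (hb i x).
  move=> i x Dx; have [+ _] := hbI i x Dx; rewrite /oint /Delta_o /=.
  have [p0 [_ q1]] := pq i; move=> /andP[px xq].
  by rewrite (le_lt_trans p0 px) (lt_le_trans xq q1).
have hbF : forall i x, Delta_o x -> F (hb i x) = x.
  by move=> i x Dx; have [] := hbI i x Dx.
have oD : forall x : R, Delta_o x -> Delta x.
  by move=> x; rewrite /Delta_o /= => /andP[x0 x1]; rewrite /Delta /= !ltW.
have half : Delta_o (2^-1 : R).
  by rewrite /Delta_o /=; apply/andP; split; lra.
have D0 : Delta (0 : R) by rewrite /Delta /= lexx ler01.
have C00 : 0 <= C0.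
  have [_ H] := hder 0%N id erefl _ half.
  by rewrite expr0 mulr1 in H; exact: le_trans (normr_ge0 _) H.
have rho01 : 0 <= rho <= 1 by rewrite !ltW.
have Hlip : forall m g, Hn hb m g -> forall x y : R, Delta_o x -> Delta_o y ->
    `|g x - g y| <= C0 * `|x - y|.
  by move=> m g Hg; apply: (@Hn_lip _ C0 rho m g) => //; exact: hder.
have path : forall m g, Hn hb m g -> forall k, (k <= m)%N ->
    forall x y : R, Delta_o x -> Delta_o y ->
    [/\ Delta_o (iter k F (g x)), Delta_o (iter k F (g y)) &
        `|iter k F (g x) - iter k F (g y)| <= C0 * `|x - y|].
  move=> m g Hg k km x y Dx Dy.
  have [g' [Hg' eg]] := Hn_peel hb F hbD hbF _ _ Hg _ km.
  rewrite !eg //; split; first exact: (Hn_maps hb hbD _ _ Hg' x Dx).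
    exact: (Hn_maps hb hbD _ _ Hg' y Dy).
  exact: Hlip _ _ Hg' _ _ Dx Dy.
pose X := `|xi 0| + `|Kx|.
have X0 : 0 <= X by rewrite addr_ge0.
have Xb : forall x : R, Delta x -> `|xi x| <= X.
  move=> x Dx; have := Hx x 0 Dx D0; rewrite subr0 => H.
  apply: le_trans (@tri _ _ (xi x) (xi 0)) _; rewrite lerD2l.
  apply: le_trans H _; apply: le_trans (ler_wpM2r (powR_ge0 _ _) (ler_norm Kx)) _.
  rewrite -[X in _ <= X]mulr1; apply: ler_wpM2l => //.
  apply: (@le_trans _ _ (1 `^ a)); last by rewrite powR1.
  apply: (ge0_ler_powR (ltW a0)); rewrite ?nnegrE //.
  by move: Dx; rewrite /Delta /= => /andP[x0 x1]; rewrite ger0_norm.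
have [L [L0 GL]] := @G_lip _ _ a Om G a0 cOm Om0 C1G.
pose Mc := Num.sqrt N%:R * (C0 * L * C0 / (1 - gamma)).
have g1' : 0 < 1 - gamma by rewrite subr_gt0.
have Mc0 : 0 <= Mc.
  rewrite /Mc; apply: mulr_ge0; first exact: sqrtr_ge0.
  apply: mulr_ge0; last by rewrite invr_ge0 ltW.
  by apply: mulr_ge0 => //; apply: mulr_ge0.
pose Kc := `|Kx| * C0 `^ a.
have Kc0 : 0 <= Kc by rewrite mulr_ge0 ?powR_ge0.
pose C := X + Kc + X * (1 + Mc) + 1.
exists C; split.
  by rewrite /C ltr_wpDl // !addr_ge0 // mulr_ge0 // addr_ge0.
move=> psi hpsi n h n1 Hh phi.
pose A1 := [set (`|psi z|)%:E | z in [set z | Delta_o z.1 /\ Om z.2]].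
pose A2 := [set r | exists i x1 x2 y1 y2,
        [/\ Delta_o x1 /\ Delta_o x2, Om y1 /\ Om y2, (x1, y1) <> (x2, y2) &
        r = (`|psi (hb i x1, y1) - psi (hb i x2, y2)|
               / (`|x1 - x2| `^ a + enorm (y1 - y2)))%:E]].
pose B1 := [set (`|phi x|)%:E | x in Delta_o].
pose B2 := [set r | exists i x y, [/\ Delta_o x, Delta_o y, x <> y &
        r = (`|phi (hb i x) - phi (hb i y)| / `|x - y| `^ a)%:E]].
have eA : normDhat a hb Om psi = (ereal_sup A1 + ereal_sup A2)%E by [].
have eB : normD a hb phi = (ereal_sup B1 + ereal_sup B2)%E by [].
have [[i0 _]|nI] := pselect (exists i : I, True); last first.
  rewrite eA eB.
  have -> : A2 = set0.
    by apply/seteqP; split => // r [i _]; case: nI; exists i.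
  have -> : B2 = set0.
    by apply/seteqP; split => // r [i _]; case: nI; exists i.
  rewrite ereal_sup0 !addeNy; split => //.
  exact: leNye.
have hD : Delta_o (4^-1 : R) by rewrite /Delta_o /=; apply/andP; split; lra.
have S10 : (0 <= ereal_sup A1)%E.
  apply: le_trans (ereal_sup_ubound (_ : A1 (`|psi (2^-1, 0)|)%:E)).
    by rewrite lee_fin.
  by exists (2^-1, 0) => //; split.
have H10 : (0 <= ereal_sup A2)%E.
  apply: le_trans (ereal_sup_ubound (_ : A2 _)).
    2: exists i0, (2^-1), (4^-1), 0, 0; split => //.
    by rewrite lee_fin divr_ge0 // addr_ge0 ?powR_ge0 // /enorm sqrtr_ge0.
  by case=> /eqP; lra.
rewrite eA in hpsi.
have S1f : (ereal_sup A1 < +oo)%E by apply: le_lt_trans hpsi; exact: leeDl.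
have H1f : (ereal_sup A2 < +oo)%E by apply: le_lt_trans hpsi; exact: leeDr.
pose s := fine (ereal_sup A1).
pose hh := fine (ereal_sup A2).
have eS : ereal_sup A1 = s%:E by rewrite fineK // ge0_fin_numE.
have eH : ereal_sup A2 = hh%:E by rewrite fineK // ge0_fin_numE.
have s0 : 0 <= s by rewrite -lee_fin -eS.
have hh0 : 0 <= hh by rewrite -lee_fin -eH.
have Bsup : forall z, Delta_o z.1 -> Om z.2 -> `|psi z| <= s.
  move=> z D1 O2; rewrite -lee_fin -eS; apply: ereal_sup_ubound.
  by exists z.
have Bhol : forall i x1 x2 y1 y2, Delta_o x1 -> Delta_o x2 -> Om y1 -> Om y2 ->
    (x1, y1) <> (x2, y2) ->
    `|psi (hb i x1, y1) - psi (hb i x2, y2)|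
               / (`|x1 - x2| `^ a + enorm (y1 - y2)) <= hh.
  move=> i x1 x2 y1 y2 D1 D2 O1 O2 ne; rewrite -lee_fin -eH.
  by apply: ereal_sup_ubound; exists i, x1, x2, y1, y2.
have E1 : forall w, Delta_o w -> iter n F (h w) = w.
  move=> w Dw; have [g' [Hg' eg]] := Hn_peel hb F hbD hbF _ _ Hh _ (leqnn n).
  by rewrite eg //; move: Hg'; rewrite subnn /= => ->.
have OmP : forall m g x, Hn hb m g -> (n <= m)%N -> Delta_o x ->
    Om (Fhatn F G n (g x, 0)).2.
  move=> m g x Hg nm Dx; apply: Fhatn_Om => // k kn.
  have [D1 _ _] := path m g Hg k (leq_trans (ltnW kn) nm) x x Dx Dx.
  exact: oD.
have T1 : (ereal_sup B1 <= (X * s)%:E)%E.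
  apply: ge_ereal_sup => r [x Dx <-]; rewrite lee_fin.
  rewrite /phi /psin normrM; apply: ler_pM => //.
    apply: Xb; apply: oD; exact: (Hn_maps hb hbD _ _ Hh x Dx).
  apply: Bsup; last exact: (OmP n h x Hh (leqnn n) Dx).
  by rewrite Fhatn_fst /= E1.
have T2 : (ereal_sup B2 <= (Kc * s + X * (hh * (1 + Mc)))%:E)%E.
  apply: ge_ereal_sup => r [i [x [y [Dx Dy xy ->]]]]; rewrite lee_fin.
  pose g := h \o hb i.
  have Hg : Hn hb n.+1 g := Hn_snoc hb n h i Hh.
  have zx1 : forall w, Delta_o w -> (Fhatn F G n (g w, 0)).1 = hb i w.
    by move=> w Dw; rewrite Fhatn_fst /= E1 //; apply: hbD.
  have ezx : forall w, Delta_o w ->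
      psi (Fhatn F G n (g w, 0)) = psi (hb i w, (Fhatn F G n (g w, 0)).2).
    by move=> w Dw; rewrite [Fhatn F G n (g w, 0)]surjective_pairing zx1.
  have Ox := OmP _ g x Hg (leqnSn n) Dx.
  have Oy := OmP _ g y Hg (leqnSn n) Dy.
  pose d := `|x - y|.
  have d0 : 0 < d by rewrite /d normr_gt0 subr_eq0; apply/eqP.
  have d1 : d <= 1.
    move: Dx Dy; rewrite /d /Delta_o /= => /andP[x0 x1] /andP[y0 y1].
    by rewrite ler_norml; apply/andP; split; lra.
  pose da := d `^ a.
  have da0 : 0 < da by apply: powR_gt0.
  have dda : d <= da by apply: ger1_powR; rewrite ?d0.
  have Hs : forall k, (k <= n)%N -> [/\ Delta (iter k F (g x)),
      Delta (iter k F (g y)) & `|iter k F (g x) - iter k F (g y)| <= C0 * d].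
    move=> k kn; have [P Q W] := path _ g Hg k (leqW kn) x y Dx Dy.
    by split => //; apply: oD.
  have gg : 0 <= gamma < 1 by rewrite (ltW g0) g1.
  have Te := @tele R N F G Om C0 gamma L (C0 * d) n (g x) (g y) C00
    gg L0 (mulr_ge0 C00 (ltW d0)) GOm GL contr Hs Om0.
  have Yb : enorm ((Fhatn F G n (g x, 0)).2 - (Fhatn F G n (g y, 0)).2) <= Mc * da.
    apply: le_trans Te _; apply: le_trans (_ : Mc * d <= _); last first.
      by apply: ler_wpM2l.
    rewrite le_eqVlt; apply/orP; left; apply/eqP; rewrite /Mc.
    field; by rewrite gt_eqF.
  have Ppsi : `|psi (Fhatn F G n (g x, 0)) - psi (Fhatn F G n (g y, 0))|
      <= hh * (1 + Mc) * da.
    rewrite ezx // [psi (Fhatn F G n (g y, 0))]ezx //.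
    have ne : (x, (Fhatn F G n (g x, 0)).2) <> (y, (Fhatn F G n (g y, 0)).2).
      by case.
    have := Bhol i x y _ _ Dx Dy Ox Oy ne.
    rewrite ler_pdivrMr; last first.
      by rewrite (lt_le_trans da0) // lerDl /enorm sqrtr_ge0.
    move=> H; apply: le_trans H _.
    rewrite -mulrA; apply: ler_wpM2l => //.
    by rewrite mulrDl mul1r lerD2l.
  have Pxi : `|xi (g x) - xi (g y)| <= Kc * da.
    have := Hx (g x) (g y) (oD _ (Hn_maps hb hbD _ _ Hg x Dx))
                           (oD _ (Hn_maps hb hbD _ _ Hg y Dy)).
    move=> H; apply: le_trans H _.
    apply: le_trans (ler_wpM2r (powR_ge0 _ _) (ler_norm Kx)) _.
    rewrite /Kc -mulrA; apply: ler_wpM2l => //.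
    rewrite /da -powRM ?(ltW d0) //; apply: (ge0_ler_powR (ltW a0)).
    - by rewrite nnegrE.
    - by rewrite nnegrE mulr_ge0 // ltW.
    - exact: Hlip _ _ Hg _ _ Dx Dy.
  rewrite (ler_pdivrMr _ _ da0).
  have id4 : forall A B C D : R, A * B - C * D = (A - C) * B + C * (B - D).
    by move=> *; ring.
  rewrite /phi /psin id4.
  apply: le_trans (ler_normD _ _) _; rewrite !normrM.
  have Bx : `|psi (Fhatn F G n (g x, 0))| <= s.
    by apply: Bsup => //; rewrite zx1 //; apply: hbD.
  have Xy : `|xi (g y)| <= X by apply: Xb; apply: oD; exact: (Hn_maps hb hbD _ _ Hg y Dy).
  apply: le_trans (lerD (ler_pM _ _ Pxi Bx) (ler_pM _ _ Xy Ppsi)) _ => //.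
  by rewrite le_eqVlt; apply/orP; left; apply/eqP; ring.
rewrite eB eA eS eH.
split.
  by apply: le_lt_trans (leeD T1 T2) _; rewrite -EFinD; exact: ltry.
apply: le_trans (leeD T1 T2) _; rewrite -EFinD -EFinD -EFinM lee_fin.
have P1 : 0 <= X * (1 + Mc) * s by rewrite !mulr_ge0 // addr_ge0.
have P2 : 0 <= (X + Kc) * hh by rewrite !mulr_ge0 // addr_ge0.
rewrite /C; nra.
Qed.
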